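(* Let $P:=\mathrm{conv}\{\rho_0,\rho_1,\ldots,\rho_n\}\subset N_\mathbb{R}$ be an $n$-simplex such that $\sum_{i=0}^n\lambda_i\rho_i=0$ for some $\lambda_0,\ldots,\lambda_n\in\mathbb{Z}_{>0}$. Let $h:=\sum_{i=0}^n\lambda_i$ and $k:=|N\cap P^\circ|$, where $P^\circ$ is the interior of $P$. Then $$\mathrm{vol}\,P\leq\frac{k\,h^n}{n!\,\lambda_1\lambda_2\cdots\lambda_n}.$$
   Context: $N\cong\mathbb{Z}^n$ is a lattice and $N_\mathbb{R}:=N\otimes_\mathbb{Z}\mathbb{R}$. Volume is taken relative to the lattice $N$, i.e. normalised so that a fundamental parallelepiped of $N$ has volume $1$. *)

(* Defs.v *)
From HB Require Import structures.
From mathcomp Require Import all_boot all_order all_algebra.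
Set Implicit Arguments. Unset Strict Implicit. Unset Printing Implicit Defensive.
Import Order.TTheory GRing.Theory Num.Theory.
Local Open Scope ring_scope.

(* The lattice N = Z^n is 'rV[int]_n, and N_R is 'rV[R]_n for an ordered
   field R (the reals being the intended instance). *)

Definition toR (R : realFieldType) (n : nat) (v : 'rV[int]_n) : 'rV[R]_n :=
  map_mx (fun z : int => z%:~R) v.

Definition in_conv (R : realFieldType) (n m : nat)
    (rho : 'I_m -> 'rV[int]_n) (x : 'rV[R]_n) : Prop :=
  exists mu : 'I_m -> R,
    (forall i, 0 <= mu i) /\ \sum_(i < m) mu i = 1 /\
    x = \sum_(i < m) mu i *: toR R (rho i).

(* x lies in the (topological) interior P° of P: some open box (= open ball
   for the sup norm) around x is contained in P *)
Definition in_interior (R : realFieldType) (n m : nat)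
    (rho : 'I_m -> 'rV[int]_n) (x : 'rV[R]_n) : Prop :=
  exists2 eps : R, 0 < eps &
    forall y : 'rV[R]_n, (forall j, `|y 0 j - x 0 j| < eps) -> in_conv rho y.

(* rho_0,...,rho_n are affinely independent, i.e. P is an n-simplex *)
Definition affinely_independent (R : realFieldType) (n m : nat)
    (rho : 'I_m -> 'rV[int]_n) : Prop :=
  forall mu : 'I_m -> R,
    \sum_(i < m) mu i = 0 -> \sum_(i < m) mu i *: toR R (rho i) = 0 ->
    forall i, mu i = 0.

Definition simplex_vol (R : realFieldType) (n : nat)
    (rho : 'I_n.+1 -> 'rV[int]_n) : R :=
  `|\det (\matrix_(i < n, j < n)
          (toR R (rho (lift ord0 i)) 0 j - toR R (rho ord0) 0 j))|
  / (n`!)%:R.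

(* Main.v *)
Require Import Defs.
From HB Require Import structures.
From mathcomp Require Import all_boot all_order all_algebra.
From mathcomp Require Import ring lra zify.
Import Order.TTheory GRing.Theory Num.Theory.
Local Open Scope ring_scope.

Lemma zm (V : zmodType) (r u y p q : V) : y = r - p - q + ((u - r) + (y - u) + (p + q)).
Proof.
have -> : u - r + (y - u) = y - r by rewrite addrC addrA subrK.
have -> : r - p - q = r - (p + q) by rewrite opprD addrA.
by rewrite addrA addrAC addrNK addrC subrK.
Qed.

Lemma interior_pt (R : realFieldType) (n : nat) (rho : 'I_n.+1 -> 'rV[int]_n)
   (E : 'M[int]_n) (u Z : 'rV[int]_n) (H : nat) :
  E = \matrix_(i, j) (rho (lift ord0 i) 0 j - rho ord0 0 j) ->
  \det E != 0 -> (0 < H)%N -> H%:Z *: (u - rho ord0) = Z *m E ->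
  (forall i, 0 < Z 0 i) -> \sum_i Z 0 i < H%:Z -> in_interior rho (toR R u).
Proof.
move=> Edef dE Hpos HuZ Zpos Zsum.
pose ER := map_mx (fun z : int => (z%:~R : R)) E.
have uER : ER \in unitmx by rewrite unitmxE det_map_mx unitfE intr_eq0.
have rowER : forall i, row i ER = toR R (rho (lift ord0 i)) - toR R (rho ord0).
  by move=> i; apply/rowP => j; rewrite !mxE Edef mxE intrB.
have HR : (0 : R) < H%:R by rewrite ltr0n.
have keyu : toR R u = toR R (rho ord0) + (H%:R)^-1 *: (toR R Z *m ER).
  have := congr1 (map_mx (fun z : int => (z%:~R : R))) HuZ.
  rewrite map_mxM map_mxZ map_mxB /= => <-.
  rewrite scalerA mulVf ?gt_eqF // scale1r /toR.
  by rewrite addrC subrK.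
pose beta i : R := (Z 0 i)%:~R / H%:R.
have betaP i : (H%:R)^-1 <= beta i.
  by rewrite /beta ler_pdivlMr // mulVf ?gt_eqF // ler1z; exact: Zpos.
have sbeta : \sum_i beta i <= 1 - (H%:R)^-1.
  rewrite /beta -mulr_suml -rmorph_sum /= ler_pdivrMr // mulrBl mul1r mulVf ?gt_eqF //.
  have : \sum_i Z 0 i <= H%:Z - 1 by rewrite -ltzD1 subrK.
  by rewrite -(ler_int R) rmorphB /=.
pose Einv := invmx ER.
pose K : R := 1 + \sum_i \sum_j `|Einv i j|.
have K0 : 0 <= \sum_i \sum_j `|Einv i j| by apply: sumr_ge0 => i _; apply: sumr_ge0.
have Kpos : 0 < K by rewrite /K ltr_pwDl.
exists ((H%:R * K)^-1); first by rewrite invr_gt0 mulr_gt0.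
move=> y hy.
pose del := y - toR R u.
pose c := del *m Einv.
have csum : \sum_i `|c 0 i| < (H%:R)^-1.
  have : \sum_i `|c 0 i| <= (H%:R * K)^-1 * \sum_i \sum_j `|Einv i j|.
    rewrite exchange_big /= mulr_sumr; apply: ler_sum => i _.
    rewrite /c mxE mulr_sumr; apply: le_trans (ler_norm_sum _ _ _) _.
    apply: ler_sum => j _; rewrite normrM ler_wpM2r //.
    rewrite /del !mxE; by have := hy j; rewrite /toR mxE => /ltW.
  move/le_lt_trans; apply.
  rewrite invfM -mulrA gtr_pMr ?invr_gt0 //.
  by rewrite ltr_pdivrMl // mulr1 /K ltrDr.
have cabs i : `|c 0 i| < (H%:R)^-1.
  apply: le_lt_trans csum; rewrite (bigD1 i) //= lerDl.
  by apply: sumr_ge0 => *.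
have csum' : \sum_i c 0 i < (H%:R)^-1.
  apply: le_lt_trans csum; exact: le_trans (ler_norm _) (ler_norm_sum _ _ _).
pose mu (j : 'I_n.+1) : R := if unlift ord0 j is Some i then beta i + c 0 i
   else (1 - \sum_i beta i) - \sum_i c 0 i.
have mu0 : mu ord0 = (1 - \sum_i beta i) - \sum_i c 0 i by rewrite /mu unlift_none.
have muS i : mu (lift ord0 i) = beta i + c 0 i by rewrite /mu liftK.
exists mu; split; [|split].
- move=> j; rewrite /mu; case: unliftP => [i _|_].
    have h1 := cabs i; have h2 := betaP i.
    have h3 : - c 0 i <= `|c 0 i| by rewrite -normrN ler_norm.
    lra.
  have := sbeta; have := csum'; lra.
- rewrite big_ord_recl mu0.
  have -> : \sum_(i < n) mu (lift ord0 i) = \sum_i (beta i + c 0 i).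
    by apply: eq_bigr => i _; exact: muS.
  rewrite big_split /=.
  lra.
- rewrite big_ord_recl mu0.
  have -> : \sum_(i < n) mu (lift ord0 i) *: toR R (rho (lift ord0 i)) = \sum_i (beta i + c 0 i) *: toR R (rho (lift ord0 i)).
    by apply: eq_bigr => i _; rewrite muS.
  have E1 : \sum_i (beta i + c 0 i) *: toR R (rho (lift ord0 i)) =
     (toR R u - toR R (rho ord0)) + del + (\sum_i beta i + \sum_i c 0 i) *: toR R (rho ord0).
    have : (\row_i beta i + c) *m ER = toR R u - toR R (rho ord0) + del.
      rewrite mulmxDl; congr (_ + _).
        have -> : \row_i beta i = (H%:R)^-1 *: toR R Z.
          by apply/rowP=> i; rewrite !mxE mulrC.
        by rewrite -scalemxAl keyu addrAC subrr add0r.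
      by rewrite /c -mulmxA mulVmx // mulmx1.
    rewrite mulmx_sum_row => E2.
    rewrite (eq_bigr (fun i => (beta i + c 0 i) *: (toR R (rho (lift ord0 i)) - toR R (rho ord0)))) in E2; last first.
      by move=> i _; rewrite rowER [in LHS]mxE mxE.
    move: E2; rewrite (eq_bigr (fun i => (beta i + c 0 i) *: toR R (rho (lift ord0 i)) - (beta i + c 0 i) *: toR R (rho ord0))); last by move=> i _; rewrite scalerBr.
    rewrite sumrB -scaler_suml big_split /= => <-.
    by rewrite subrK.
  rewrite E1 /del scalerBl scalerBl scale1r scalerDl.
  exact: zm.
Qed.

Lemma card_dep (n : nat) (m : 'I_n -> nat) :
  #|{dffun forall i : 'I_n, 'I_(m i)}| = (\prod_(i < n) m i)%N.
Proof.
rewrite card_dep_ffun foldr_map -big_enum /=.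
by elim: (enum 'I_n) => [|a s IH]; rewrite ?big_nil ?big_cons //= IH card_ord.
Qed.

Lemma absz_unit (x : int) : x \is a GRing.unit -> absz x = 1%N.
Proof.
move=> ux; have := congr1 absz (mulrV ux); rewrite abszM => /eqP.
by rewrite muln_eq1 => /andP[/eqP -> _].
Qed.

Lemma dvdz_sum (d : int) (I : finType) (F : I -> int) :
  (forall i, (d %| F i)%Z) -> (d %| \sum_i F i)%Z.
Proof.
move=> H; apply: (big_ind (fun x => (d %| x)%Z)) => [|x y hx hy|i _].
- exact: dvdz0.
- exact: rpredD.
- exact: H.
Qed.

Section Core.
Variables (n : nat) (E : 'M[int]_n) (h l0 : nat) (lam : 'I_n -> nat) (w : 'rV[int]_n).
Hypotheses (detE : \det E != 0) (l0pos : (0 < l0)%N) (hdef : h = (l0 + \sum_i lam i)%N)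
  (lampos : forall i, (0 < lam i)%N)
  (hw : h%:Z *: w = (\row_i (lam i)%:Z) *m E).

Lemma core : exists s : seq 'rV[int]_n,
  [/\ uniq s, (absz (\det E) * \prod_i lam i <= size s * h ^ n)%N &
   forall Z, Z \in s -> [/\ forall i, 0 < Z 0 i, \sum_i Z 0 i < (h * absz (\det E))%N%:Z &
        forall j, ((h * absz (\det E))%N%:Z %| (Z *m E) 0%R j)%Z]].
Proof.
set D := absz (\det E).
have Dpos : (0 < D)%N by rewrite absz_gt0.
have hpos : (0 < h)%N by rewrite hdef addn_gt0 l0pos.
have [L uL [Rm uR [d _ hE]]] := int_Smith_normal_form E.
pose dg (i : 'I_n) := d`_i.
have hE' : E = L *m diag_mx (\row_i dg i) *m Rm.
  by rewrite hE; congr (_ *m _ *m _); apply/matrixP => i j; rewrite !mxE.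
have Dprod : D = (\prod_i absz (dg i))%N.
  rewrite /D hE' !det_mulmx det_diag !abszM.
  rewrite (@absz_unit (\det L)) -?unitmxE //.
  rewrite (@absz_unit (\det Rm)) -?unitmxE // mul1n muln1.
  rewrite (big_morph absz abszM (erefl _)); apply: eq_bigr => i _; by rewrite mxE.
have dgdvd i : (absz (dg i) %| h * D)%N.
  by apply: dvdn_mull; rewrite Dprod (bigD1 i) //= dvdn_mulr.
pose m (i : 'I_n) := ((h * D) %/ absz (dg i))%N.
have mK i : (m i * absz (dg i))%N = (h * D)%N by rewrite divnK.
have mpos i : (0 < m i)%N.
  have := mK i; have : (0 < h * D)%N by rewrite muln_gt0 hpos Dpos.
  move: (m i) (absz (dg i)) (h * D)%N => a b c; nia.
pose Tb := {dffun forall i : 'I_n, 'I_(D * lam i)}.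
pose Tc := {dffun forall i : 'I_n, 'I_(m i)}.
pose yv (b : Tb) : 'rV[int]_n := \row_i ((b i : nat)%:Z).
pose key (b : Tb) : Tc :=
  finfun (fun i => Ordinal (ltn_pmod (absz (((yv b *m L) 0%R i) %% (m i)%:Z)%Z) (mpos i))).
have keyP b b' : key b = key b' -> forall i, ((m i)%:Z %| ((yv b - yv b') *m L) 0%R i)%Z.
  move=> /ffunP hk i; have := congr1 val (hk i); rewrite !ffunE /=.
  have mi0 : (m i)%:Z != 0 by rewrite eqz_nat -lt0n mpos.
  have mi1 : (0 < (m i)%:Z) by rewrite ltz_nat mpos.
  have g1 := modz_ge0 ((yv b *m L) 0 i) mi0.
  have g2 := modz_ge0 ((yv b' *m L) 0 i) mi0.
  have l1 := ltz_pmod ((yv b *m L) 0 i) mi1.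
  have l2 := ltz_pmod ((yv b' *m L) 0 i) mi1.
  move: g1 g2 l1 l2; set x1 := ((yv b *m L) 0%R i %% (m i)%:Z)%Z; set x2 := ((yv b' *m L) 0%R i %% (m i)%:Z)%Z.
  move=> g1 g2 l1 l2 hx.
  have hx' : x1 = x2 by move: hx; rewrite !modn_small; lia.
  by rewrite mulmxBl mxE [X in _ + X]mxE -eqz_mod_dvd; apply/eqP.
have K1 b b' : key b = key b' -> forall j, ((h * D)%N%:Z %| ((yv b - yv b') *m E) 0%R j)%Z.
  move=> hk j; rewrite hE' !mulmxA mul_mx_diag mxE.
  apply: dvdz_sum => k; apply: dvdz_mulr; rewrite mxE [X in _ * X]mxE.
  apply: dvdz_trans (dvdz_mul (keyP _ _ hk k) (dvdzz (dg k))).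
  by rewrite dvdzE abszM /= mK.
have Dlpos i : (0 < D * lam i)%N by rewrite muln_gt0 Dpos lampos.
pose binit : Tb := finfun (fun i => Ordinal (Dlpos i)).
pose fib (c : Tc) := #|[set b : Tb | key b == c]|.
have sumfib : #|Tb| = (\sum_(c : Tc) fib c)%N.
  rewrite -sum1_card (partition_big key xpredT) //=; apply: eq_bigr => c _.
  by rewrite /fib -sum1_card; apply: eq_bigl => b; rewrite inE.
have [c0 _ c0max] := @arg_maxnP Tc (key binit) xpredT fib isT.
have hb : (#|Tb| <= #|Tc| * fib c0)%N.
  rewrite sumfib.
  have : (\sum_(c : Tc) fib c <= \sum_(c : Tc) fib c0)%N by apply: leq_sum => c _; exact: c0max.
  move/leq_trans; apply; by rewrite sum_nat_const.
have cardTb : #|Tb| = (D ^ n * \prod_i lam i)%N.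
  by rewrite card_dep big_split /= big_const_ord iter_muln muln1.
have cardTc : (#|Tc| * D)%N = ((h * D) ^ n)%N.
  rewrite card_dep [X in (_ * X)%N]Dprod -big_split /=.
  by rewrite (eq_bigr (fun _ => (h * D)%N)) ?big_const_ord ?iter_muln ?muln1 // => i _; rewrite mK.
set F := [set b : Tb | key b == c0].
have F0 : (0 < #|F|)%N.
  have : (0 < #|Tb|)%N by rewrite cardTb muln_gt0 expn_gt0 Dpos prodn_gt0.
  by move/leq_trans/(_ hb); rewrite muln_gt0 => /andP[].
have [bF bFF] : exists bF, bF \in F by apply/card_gt0P.
pose sb (b : Tb) := (\sum_i (b i : nat))%N.
have [b0 b0F b0max] := @arg_maxnP Tb bF (fun b => b \in F) sb bFF.
pose lr : 'rV[int]_n := \row_i (lam i)%:Z.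
pose Zv (b : Tb) := yv b - yv b0 + D%:Z *: lr.
exists [seq Zv b | b <- enum F]; split.
- rewrite map_inj_uniq ?enum_uniq // => b b' hZ.
  have : yv b = yv b' by move: hZ; rewrite /Zv => /addIr /addIr.
  move=> hy; apply/ffunP => i; apply: val_inj.
  by have := congr1 (fun v : 'rV[int]_n => v 0 i) hy; rewrite !mxE; case.
- rewrite size_map -cardE.
  have hF : fib c0 = #|F| by [].
  rewrite cardTb hF in hb.
  have : (D * (D ^ n * \prod_i lam i) <= D * (#|Tc| * #|F|))%N by rewrite leq_mul2l hb orbT.
  have Xpos : (0 < D ^ n)%N by rewrite expn_gt0 Dpos.
  rewrite -(leq_pmul2l Xpos).
  move: cardTc; rewrite expnMn.
  move: (D ^ n)%N (h ^ n)%N (\prod_i lam i)%N #|F| #|Tc| Xpos => X Y P f T Xp H2 H1.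
  rewrite leq_pmul2l // in H1.
  rewrite -(leq_pmul2l Xp).
  have -> : (X * (D * P) = D * (X * P))%N by rewrite mulnCA.
  apply: (leq_trans H1).
  have -> : (D * (T * f) = (T * D) * f)%N by rewrite mulnC mulnAC.
  by rewrite H2; apply: eq_leq; nia.
- move=> Z /mapP [b bFb ->]; rewrite mem_enum in bFb.
  have kb : key b = key b0.
    by move: bFb b0F; rewrite !inE => /eqP -> /eqP ->.
  split.
  + move=> i; rewrite !mxE.
    have := ltn_ord (b0 i); move: (b i : nat) (b0 i : nat) => x y; lia.
  + have -> : \sum_i Zv b 0 i = (sb b)%:Z - (sb b0)%:Z + (D * \sum_i lam i)%N%:Z.
      rewrite /sb !(big_morph Posz PoszD (erefl 0%:Z)) big_distrr /= -sumrB.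
      rewrite (big_morph Posz PoszD (erefl 0%:Z)) -big_split /=.
      by apply: eq_bigr => i _; rewrite !mxE PoszM.
    have := b0max b bFb; have : (0 < l0 * D)%N by rewrite muln_gt0 l0pos Dpos.
    rewrite hdef mulnDl; move: (sb b) (sb b0) (\sum_i lam i)%N (l0 * D)%N => x y z t.
    rewrite /geq; lia.
  + move=> j; rewrite /Zv mulmxDl -scalemxAl /lr -hw scalerA mxE [X in _ + X]mxE.
    apply: rpredD; first exact: K1.
    by rewrite -PoszM mulnC; apply: dvdz_mulr; exact: dvdzz.
Qed.
End Core.


Lemma mulE_inj (n : nat) (E : 'M[int]_n) (Z Z' : 'rV[int]_n) :
  \det E != 0 -> Z *m E = Z' *m E -> Z = Z'.
Proof.
move=> dE h; have := congr1 (mulmx ^~ (\adj E)) h.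
rewrite /= -!mulmxA mul_mx_adj !mul_mx_scalar => h2.
apply/rowP => j; have := congr1 (fun v : 'rV[int]_n => v 0 j) h2.
by rewrite /= !mxE => /(mulfI dE).
Qed.

(* k = |N ∩ P°| is represented by a duplicate-free list [interior] enumerating
   exactly the lattice points of the interior of P; k = size interior. *)
Theorem mainTheorem5 (R : realFieldType) (n : nat)
    (rho : 'I_n.+1 -> 'rV[int]_n) (lambda : 'I_n.+1 -> nat)
    (interior : seq 'rV[int]_n) :
  affinely_independent R rho ->
  (forall i, (0 < lambda i)%N) ->
  \sum_(i < n.+1) (lambda i)%:Z *: rho i = 0 ->
  uniq interior ->
  (forall v : 'rV[int]_n, v \in interior <-> in_interior rho (toR R v)) ->
  simplex_vol R rho <=
    (size interior)%:R * (\sum_(i < n.+1) lambda i)%:R ^+ n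
    / ((n`!)%:R * \prod_(i < n) (lambda (lift ord0 i))%:R).
Proof.
move=> hind lampos hrel huniq hint.
set h := (\sum_(i < n.+1) lambda i)%N.
pose E : 'M[int]_n := \matrix_(i, j) (rho (lift ord0 i) 0 j - rho ord0 0 j).
pose lam i := lambda (lift ord0 i).
have hdef : h = (lambda ord0 + \sum_i lam i)%N by rewrite /h big_ord_recl.
have hw : h%:Z *: (- rho ord0) = (\row_i (lam i)%:Z) *m E.
  rewrite mulmx_sum_row.
  have -> : \sum_i (\row_i (lam i)%:Z) 0 i *: row i E =
      \sum_i ((lam i)%:Z *: rho (lift ord0 i) - (lam i)%:Z *: rho ord0).
    apply: eq_bigr => i _; rewrite mxE -scalerBr; congr (_ *: _).
    by apply/rowP => j; rewrite !mxE.
  rewrite sumrB -scaler_suml.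
  move: hrel; rewrite big_ord_recl => /eqP; rewrite addrC addr_eq0 => /eqP ->.
  rewrite hdef PoszD (big_morph Posz PoszD (erefl 0%:Z)) scalerN scalerDl opprD.
  by [].
pose ER := map_mx (fun z : int => (z%:~R : R)) E.
have rowER : forall i, row i ER = toR R (rho (lift ord0 i)) - toR R (rho ord0).
  by move=> i; apply/rowP => j; rewrite !mxE intrB.
have detE : \det E != 0.
  apply/negP => /eqP d0.
  have : \det ER == 0 by rewrite det_map_mx d0.
  case/det0P => c c0 hc.
  pose mu (j : 'I_n.+1) : R := if unlift ord0 j is Some i then c 0 i else - \sum_i c 0 i.
  have mu0 : mu ord0 = - \sum_i c 0 i by rewrite /mu unlift_none.
  have muS i : mu (lift ord0 i) = c 0 i by rewrite /mu liftK.
  have := hind mu.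
  rewrite big_ord_recl mu0.
  have -> : \sum_(i < n) mu (lift ord0 i) = \sum_i c 0 i.
    by apply: eq_bigr => i _; exact: muS.
  rewrite addNr => /(_ erefl).
  rewrite big_ord_recl mu0.
  have -> : \sum_(i < n) mu (lift ord0 i) *: toR R (rho (lift ord0 i)) =
     \sum_i c 0 i *: toR R (rho (lift ord0 i)).
    by apply: eq_bigr => i _; rewrite muS.
  have : c *m ER = 0 := hc.
  rewrite mulmx_sum_row (eq_bigr (fun i => c 0 i *: toR R (rho (lift ord0 i)) - c 0 i *: toR R (rho ord0))); last first.
    by move=> i _; rewrite rowER scalerBr.
  rewrite sumrB -scaler_suml => /eqP; rewrite subr_eq0 => /eqP ->.
  rewrite scaleNr addNr => /(_ erefl) hmu.
  apply/negP: c0; rewrite negbK; apply/eqP/rowP => i; rewrite mxE -muS; exact: hmu.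
have [s [us sbound sprop]] := @core n E h (lambda ord0) lam (- rho ord0) detE (lampos ord0) hdef (fun i => lampos _) hw.
set D := absz (\det E).
have Dpos : (0 < D)%N by rewrite absz_gt0.
have hpos : (0 < h)%N by rewrite hdef addn_gt0 lampos.
pose u (Z : 'rV[int]_n) := rho ord0 + \row_j (((Z *m E) 0%R j) %/ (h * D)%N%:Z)%Z.
have uP Z : Z \in s -> (h * D)%N%:Z *: (u Z - rho ord0) = Z *m E.
  move=> /sprop [_ _ hd]; apply/rowP => j.
  by rewrite /u addrC addKr mxE [X in _ * X]mxE mulrC (divzK (hd j)).
have uint Z : Z \in s -> u Z \in interior.
  move=> hZ; apply/hint; have [Zpos Zsum _] := sprop Z hZ.
  apply: (@interior_pt R n rho E (u Z) Z (h * D)%N) => //.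
    by rewrite muln_gt0 hpos Dpos.
  exact: uP.
have usz : (size s <= size interior)%N.
  rewrite -(size_map u); apply: uniq_leq_size.
    rewrite map_inj_in_uniq // => Z Z' hZ hZ' heq.
    apply: (@mulE_inj n E Z Z' detE); by rewrite -uP // -uP // heq.
  by move=> v /mapP [Z hZ ->]; exact: uint.
have key : (D * \prod_i lam i <= size interior * h ^ n)%N.
  apply: (leq_trans sbound); by rewrite leq_mul2r usz orbT.
have volE : simplex_vol R rho = D%:R / (n`!)%:R.
  rewrite /simplex_vol.
  have -> : \matrix_(i < n, j < n) (toR R (rho (lift ord0 i)) 0 j - toR R (rho ord0) 0 j) = ER.
    by apply/matrixP => i j; rewrite !mxE intrB.
  rewrite det_map_mx -intr_norm -abszE //.
rewrite volE -natr_prod.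
rewrite ler_pdivlMr ?mulr_gt0 ?ltr0n ?fact_gt0 ?prodn_gt0 //.
have -> : D%:R / (n`!)%:R * ((n`!)%:R * (\prod_i lam i)%:R) = D%:R * (\prod_i lam i)%:R :> R.
  by field; rewrite pnatr_eq0 -lt0n fact_gt0.
by rewrite -natrM -natrX -natrM ler_nat.
Qed.
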